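(* Suppose the family of update functions $\mathrm{Upd}$ satisfies P1 and P2. Let $\mathcal{M}=(W,\mathcal{F})$ be a measure space, $\Pr\in\Delta_{\mathcal{M}}$, $A,B\in\mathcal{F}$, and suppose that for some $\Pr'\in\mathrm{Upd}^{\mathcal{M}}(\Pr,B)$ we have $0<\Pr(A|B)<1$ and $\Pr'(A)<\Pr(A|B)$. Then there exists $\Pr''\in\mathrm{Upd}^{\mathcal{M}}(\Pr,B)$ with $\Pr''(A)>\Pr(A|B)$.
   Context: A measure space is a pair $\mathcal{M}=(W,\mathcal{F})$ with $\mathcal{F}$ an algebra of subsets of $W$; $\Delta_{\mathcal{M}}$ is the set of all probability measures on $\mathcal{M}$. An update function on $\mathcal{M}$ is a map $\mathrm{Upd}^{\mathcal{M}}:2^{\Delta_{\mathcal{M}}}\times\mathcal{F}\to 2^{\Delta_{\mathcal{M}}}$ such that $\mathrm{Upd}^{\mathcal{M}}(X,B)=\emptyset$ whenever $\Pr(B)=0$ for all $\Pr\in X$; $\mathrm{Upd}^{\mathcal{M}}(\Pr,B)$ means $\mathrm{Upd}^{\mathcal{M}}(\{\Pr\},B)$. A family $\mathrm{Upd}=\{\mathrm{Upd}^{\mathcal{M}}\}$ has one update function for each measure space. $\Pr(A|B)=\Pr(A\cap B)/\Pr(B)$. A representation shift from $\mathcal{M}=(W,\mathcal{F})$ to $\mathcal{M}'=(W',\mathcal{F}')$ is a surjection $f:W\to W'$ with $f^{-1}(B)\in\mathcal{F}$ for all $B\in\mathcal{F}'$; $(f^*(\Pr))(A)=\Pr(f^{-1}(A))$,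 $f^*(X)=\{f^*(\Pr):\Pr\in X\}$. P1: for all $\mathcal{M}$, $X\subseteq\Delta_{\mathcal{M}}$, $B\in\mathcal{F}$: $\mathrm{Upd}^{\mathcal{M}}(X,B)\subseteq\{\Pr\in\Delta_{\mathcal{M}}:\Pr(B)=1\}$. P2: for every representation shift $f$ from $\mathcal{M}$ to $\mathcal{M}'$, every $X\subseteq\Delta_{\mathcal{M}}$ and $B\in\mathcal{F}'$: $\mathrm{Upd}^{\mathcal{M}'}(f^*(X),B)=f^*(\mathrm{Upd}^{\mathcal{M}}(X,f^{-1}(B)))$. *)

(* Defs.v *)
From Stdlib Require Import Reals Classical FunctionalExtensionality PropExtensionality.
Open Scope R_scope.

Definition set (W : Type) := W -> Prop.
Definition setT {W : Type} : set W := fun _ => True.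
Definition setC {W : Type} (A : set W) : set W := fun w => ~ A w.
Definition setU {W : Type} (A B : set W) : set W := fun w => A w \/ B w.
Definition setI {W : Type} (A B : set W) : set W := fun w => A w /\ B w.
Definition preimage {W W' : Type} (f : W -> W') (B : set W') : set W :=
  fun w => B (f w).

Record is_algebra {W : Type} (F : set (set W)) : Prop := {
  alg_T : F setT;
  alg_C : forall A, F A -> F (setC A);
  alg_U : forall A B, F A -> F B -> F (setU A B) }.

Record mspace := MSpace {
  carrier : Type;
  events : set (set carrier);
  events_algebra : is_algebra events }.

Lemma alg_I (M : mspace) (A B : set (carrier M)) :
  events M A -> events M B -> events M (setI A B).
Proof.
  intros hA hB.
  assert (E : setI A B = setC (setU (setC A) (setC B))).
  { apply functional_extensionality; intro w; apply propositional_extensionality;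
    unfold setI, setC, setU; tauto. }
  rewrite E. destruct (events_algebra M) as [hT hC hU].
  apply hC, hU; apply hC; assumption.
Qed.

Record prob (M : mspace) := Prob {
  pr : forall A : set (carrier M), events M A -> R;
  pr_ge0 : forall A (hA : events M A), 0 <= pr A hA;
  pr_T : forall hT : events M setT, pr setT hT = 1;
  pr_add : forall A B (hA : events M A) (hB : events M B)
             (hAB : events M (setU A B)),
      (forall w, A w -> B w -> False) ->
      pr (setU A B) hAB = pr A hA + pr B hB }.
Arguments pr {M} _ _ _.

Definition cond_pr {M : mspace} (P : prob M) (A B : set (carrier M))
  (hA : events M A) (hB : events M B) : R :=
  pr P (setI A B) (alg_I M A B hA hB) / pr P B hB.

Definition single {M : mspace} (P : prob M) : set (prob M) := fun Q => Q = P.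

(* A family of (candidate) update functions: one map 2^Delta_M x F -> 2^Delta_M
   for every measure space M (we let it take any subset B, but all
   conditions only concern B in F). *)
Definition UpdFamily := forall M : mspace, set (prob M) -> set (carrier M) -> set (prob M).

Definition is_update_family (Upd : UpdFamily) : Prop :=
  forall (M : mspace) (X : set (prob M)) (B : set (carrier M)) (hB : events M B),
    (forall P, X P -> pr P B hB = 0) -> forall Q, ~ Upd M X B Q.

Record rep_shift (M M' : mspace) := RepShift {
  rs_fun : carrier M -> carrier M';
  rs_surj : forall w', exists w, rs_fun w = w';
  rs_meas : forall B, events M' B -> events M (preimage rs_fun B) }.
Arguments rs_fun {M M'} _ _.
Arguments rs_meas {M M'} _ _ _.

Definition is_pushforward {M M' : mspace} (f : rep_shift M M') (P : prob M) (Q : prob M') : Prop :=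
  forall A (hA : events M' A), pr Q A hA = pr P (preimage (rs_fun f) A) (rs_meas f A hA).

Definition push_set {M M' : mspace} (f : rep_shift M M') (X : set (prob M)) : set (prob M') :=
  fun Q => exists P, X P /\ is_pushforward f P Q.

Definition P1 (Upd : UpdFamily) : Prop :=
  forall (M : mspace) (X : set (prob M)) (B : set (carrier M)) (hB : events M B) (Q : prob M),
    Upd M X B Q -> pr Q B hB = 1.

Definition P2 (Upd : UpdFamily) : Prop :=
  forall (M M' : mspace) (f : rep_shift M M') (X : set (prob M)) (B : set (carrier M')),
    events M' B ->
    forall Q : prob M',
      Upd M' (push_set f X) B Q <-> push_set f (Upd M X (preimage (rs_fun f) B)) Q.

(* Main.v *)
Require Import Defs.
From Stdlib Require Import Reals.
From Stdlib Require Import Lra Lia Classical ClassicalEpsilon FunctionalExtensionality PropExtensionality ProofIrrelevance Arith ZArith.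
Open Scope R_scope.

Lemma set_ext {W : Type} (S T : set W) : (forall w, S w <-> T w) -> S = T.
Proof. intro h. apply functional_extensionality; intro w. apply propositional_extensionality; auto. Qed.

Lemma pr_ext {M : mspace} (Q : prob M) (S S' : set (carrier M)) hS hS' :
  S = S' -> pr Q S hS = pr Q S' hS'.
Proof. intros ->. f_equal. apply proof_irrelevance. Qed.

Definition set0 {W : Type} : set W := fun _ => False.

Lemma ev0 (M : mspace) : events M set0.
Proof.
  assert (E : (set0 : set (carrier M)) = setC setT).
  { apply set_ext; intro w; unfold set0, setC, setT; tauto. }
  rewrite E. apply (alg_C _ (events_algebra M)), (alg_T _ (events_algebra M)).
Qed.

Lemma evC (M : mspace) S : events M S -> events M (setC S).
Proof. apply (alg_C _ (events_algebra M)). Qed.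
Lemma evU (M : mspace) S T : events M S -> events M T -> events M (setU S T).
Proof. apply (alg_U _ (events_algebra M)). Qed.
Lemma evT (M : mspace) : events M setT.
Proof. apply (alg_T _ (events_algebra M)). Qed.

Lemma pr_add' {M : mspace} (Q : prob M) S T U hS hT hU :
  (forall w, U w <-> S w \/ T w) -> (forall w, S w -> T w -> False) ->
  pr Q U hU = pr Q S hS + pr Q T hT.
Proof.
  intros hu hd. assert (E : U = setU S T) by (apply set_ext; exact hu).
  subst U. apply pr_add; auto.
Qed.

Lemma pr0 {M : mspace} (Q : prob M) h : pr Q set0 h = 0.
Proof.
  pose proof (pr_add' Q set0 set0 set0 h h h) as H.
  assert (pr Q set0 h = pr Q set0 h + pr Q set0 h) by (apply H; unfold set0; tauto).
  lra.
Qed.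

Lemma pr_empty {M : mspace} (Q : prob M) S h : (forall w, ~ S w) -> pr Q S h = 0.
Proof.
  intro he. assert (S = set0) by (apply set_ext; intro w; unfold set0; split; [apply he|tauto]).
  subst. apply pr0.
Qed.

Lemma pr_compl {M : mspace} (Q : prob M) S h h' : pr Q (setC S) h' = 1 - pr Q S h.
Proof.
  pose proof (pr_T _ Q (evT M)) as HT.
  rewrite (pr_add' Q S (setC S) setT h h' (evT M)) in HT.
  - lra.
  - intro w; unfold setT, setC; split; [intros _; apply classic| tauto].
  - unfold setC; tauto.
Qed.

Lemma pr_mono {M : mspace} (Q : prob M) S T hS hT :
  (forall w, S w -> T w) -> pr Q S hS <= pr Q T hT.
Proof.
  intro hst.
  assert (hD : events M (setI T (setC S))) by (apply alg_I; [exact hT| apply evC; exact hS]).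
  rewrite (pr_add' Q S (setI T (setC S)) T hS hD hT).
  - pose proof (pr_ge0 _ Q _ hD). lra.
  - intro w; unfold setI, setC; split; [intro; destruct (classic (S w)); tauto | intros [|[]]; auto].
  - unfold setI, setC; tauto.
Qed.

Lemma pr_le1 {M : mspace} (Q : prob M) S h : pr Q S h <= 1.
Proof. rewrite <- (pr_T _ Q (evT M)). apply pr_mono. unfold setT; auto. Qed.

Lemma pr_split {M : mspace} (Q : prob M) E S (hE : events M E) (hS : events M S) hES hESc :
  pr Q E hE = pr Q (setI E S) hES + pr Q (setI E (setC S)) hESc.
Proof.
  apply pr_add'.
  - intro w; unfold setI, setC; split; [intro; destruct (classic (S w)); tauto | intros [|[]]; tauto].
  - unfold setI, setC; tauto.
Qed.

Lemma pr_on_full {M : mspace} (Q : prob M) A B hA hB hAB :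
  pr Q B hB = 1 -> pr Q A hA = pr Q (setI A B) hAB.
Proof.
  intro h1.
  assert (hc : events M (setI A (setC B))) by (apply alg_I; [exact hA| apply evC; exact hB]).
  rewrite (pr_split Q A B hA hB hAB hc).
  assert (pr Q (setI A (setC B)) hc <= pr Q (setC B) (evC M B hB))
    by (apply pr_mono; unfold setI; tauto).
  rewrite (pr_compl Q B hB) in H. pose proof (pr_ge0 _ Q _ hc). lra.
Qed.

Fixpoint sumR (n : nat) (f : nat -> R) : R :=
  match n with O => 0 | S n => sumR n f + f n end.

Lemma sumR_ext n f g : (forall j, (j < n)%nat -> f j = g j) -> sumR n f = sumR n g.
Proof. induction n; simpl; intros h; auto. rewrite IHn by (intros; apply h; lia). rewrite h by lia. auto. Qed.

Lemma sumR_plus n f g : sumR n (fun j => f j + g j) = sumR n f + sumR n g.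
Proof. induction n; simpl; [lra| rewrite IHn; lra]. Qed.

Lemma sumR_scal n c f : sumR n (fun j => c * f j) = c * sumR n f.
Proof. induction n; simpl; [lra| rewrite IHn; lra]. Qed.

Lemma sumR_const n c : sumR n (fun _ => c) = INR n * c.
Proof. induction n; simpl sumR; [simpl; lra| rewrite IHn, S_INR; lra]. Qed.

Lemma sumR_le n f g : (forall j, (j < n)%nat -> f j <= g j) -> sumR n f <= sumR n g.
Proof. induction n; simpl; intros h; [lra|]. pose proof (h n ltac:(lia)). pose proof (IHn ltac:(intros; apply h; lia)). lra. Qed.

Lemma sumR_shift n f : sumR (S n) f = f O + sumR n (fun j => f (S j)).
Proof. induction n; simpl in *; [lra|]. rewrite IHn. lra. Qed.

Lemma sumR_swap n m F :
  sumR n (fun k => sumR m (fun i => F k i)) = sumR m (fun i => sumR n (fun k => F k i)).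
Proof.
  induction n; simpl.
  - induction m; simpl; [lra| rewrite <- IHm; lra].
  - rewrite IHn. rewrite <- sumR_plus. reflexivity.
Qed.

Lemma mod_lemma1 n k m : (k < n -> m < n -> ((k + m) mod n + n - k) mod n = m)%nat.
Proof.
  intros hk hm.
  destruct (Nat.lt_ge_cases (k + m) n) as [h|h].
  - rewrite (Nat.mod_small (k+m)) by lia.
    replace (k + m + n - k)%nat with (m + 1 * n)%nat by lia.
    rewrite Nat.Div0.mod_add. apply Nat.mod_small; lia.
  - replace (k + m)%nat with ((k + m - n) + 1 * n)%nat at 1 by lia.
    rewrite Nat.Div0.mod_add. rewrite (Nat.mod_small (k + m - n)) by lia.
    replace (k + m - n + n - k)%nat with m by lia. apply Nat.mod_small; lia.
Qed.

Lemma mod_lemma2 n k r : (k < n -> r < n -> (k + (r + n - k) mod n) mod n = r)%nat.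
Proof.
  intros hk hr.
  destruct (Nat.lt_ge_cases r k) as [h|h].
  - rewrite (Nat.mod_small (r + n - k)) by lia.
    replace (k + (r + n - k))%nat with (r + 1 * n)%nat by lia.
    rewrite Nat.Div0.mod_add. apply Nat.mod_small; lia.
  - replace (r + n - k)%nat with ((r - k) + 1 * n)%nat by lia.
    rewrite Nat.Div0.mod_add. rewrite (Nat.mod_small (r - k)) by lia.
    replace (k + (r - k))%nat with r by lia. apply Nat.mod_small; lia.
Qed.

Lemma mod_equiv n k r m : (k < n -> r < n -> m < n ->
  ((r + n - k) mod n = m <-> r = (k + m) mod n))%nat.
Proof.
  intros hk hr hm; split; intro h.
  - rewrite <- h. symmetry. apply mod_lemma2; auto.
  - subst r. apply mod_lemma1; auto.
Qed.

Lemma sumR_rot1 n g : sumR n (fun j => g ((j + 1) mod n)%nat) = sumR n g.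
Proof.
  destruct n as [|n']; [reflexivity|].
  rewrite (sumR_shift n' g). cbn [sumR].
  replace ((n' + 1) mod S n')%nat with O.
  2:{ replace (n' + 1)%nat with (0 + 1 * S n')%nat by lia. rewrite Nat.Div0.mod_add. symmetry; apply Nat.mod_small; lia. }
  rewrite (sumR_ext n' (fun j => g ((j + 1) mod S n')%nat) (fun j => g (S j))).
  - lra.
  - intros j hj. f_equal. rewrite Nat.mod_small; lia.
Qed.

Lemma sumR_rot n s f : (0 < n)%nat -> sumR n (fun j => f ((j + s) mod n)%nat) = sumR n f.
Proof.
  intro hn. induction s.
  - apply sumR_ext. intros j hj. f_equal. rewrite Nat.add_0_r. apply Nat.mod_small; auto.
  - rewrite <- IHs. rewrite <- (sumR_rot1 n (fun c => f ((c + s) mod n)%nat)).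
    apply sumR_ext. intros j hj. f_equal.
    rewrite Nat.Div0.add_mod_idemp_l. f_equal. lia.
Qed.

Definition I (P : Prop) : R := if excluded_middle_informative P then 1 else 0.

Lemma sumR_ind_lt n m : sumR n (fun c => I (c < m)%nat) = INR (Nat.min n m).
Proof.
  induction n; simpl sumR; [simpl; lra|].
  rewrite IHn. unfold I. destruct (excluded_middle_informative (n < m)%nat).
  - replace (Nat.min (S n) m) with (S (Nat.min n m)) by lia. rewrite S_INR. lra.
  - replace (Nat.min (S n) m) with (Nat.min n m) by lia. lra.
Qed.

Lemma php : forall m (f : nat -> nat), (forall k, (k <= m)%nat -> (f k < m)%nat) ->
  exists i j, (i < j <= m)%nat /\ f i = f j.
Proof.
  induction m as [|m IH]; intros f hf.
  - specialize (hf O (le_n _)). lia.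
  - destruct (classic (exists i, (i <= m)%nat /\ f i = f (S m))) as [[i [hi he]]|hno].
    + exists i, (S m). split; [lia|auto].
    + destruct (Nat.eq_dec (f (S m)) m) as [hm|hm].
      * destruct (IH f) as [i [j [h1 h2]]].
        { intros k hk. pose proof (hf k ltac:(lia)).
          destruct (Nat.eq_dec (f k) m); [|lia]. exfalso; apply hno; exists k; split; [lia| congruence]. }
        exists i, j; split; [lia|auto].
      * pose (g := fun k => if Nat.eq_dec (f k) m then f (S m) else f k).
        destruct (IH g) as [i [j [h1 h2]]].
        { intros k hk. unfold g. pose proof (hf k ltac:(lia)). pose proof (hf (S m) (le_n _)).
          destruct (Nat.eq_dec (f k) m); lia. }
        unfold g in h2.
        destruct (Nat.eq_dec (f i) m), (Nat.eq_dec (f j) m).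
        -- exists i, j; split; [lia| congruence].
        -- exfalso; apply hno; exists j; split; [lia| congruence].
        -- exfalso; apply hno; exists i; split; [lia| congruence].
        -- exists i, j; split; [lia| auto].
Qed.

Definition nfloor (x : R) : nat := Z.to_nat (up x - 1).

Lemma nfloor_spec x : 0 <= x -> INR (nfloor x) <= x < INR (nfloor x) + 1.
Proof.
  intro hx. destruct (archimed x) as [h1 h2].
  assert (hz : (0 <= up x - 1)%Z).
  { assert (IZR (up x) > 0) by lra. apply lt_0_IZR in H. lia. }
  unfold nfloor. rewrite INR_IZR_INZ, Z2Nat.id by exact hz.
  rewrite minus_IZR. simpl. lra.
Qed.

Lemma INR_lt' a b : INR a < INR b -> (a < b)%nat.
Proof. apply INR_lt. Qed.

Lemma dirichlet p delta : 0 < p -> 0 < delta ->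
  exists n L : nat, (1 <= n)%nat /\ INR L <= INR n * p < INR L + delta.
Proof.
  intros hp hd.
  set (m := S (nfloor (1 / delta))).
  assert (hm : 1 / delta < INR m).
  { unfold m. rewrite S_INR. pose proof (nfloor_spec (1/delta)).
    assert (0 <= 1/delta) by (apply Rlt_le, Rdiv_lt_0_compat; lra). lra. }
  assert (hm0 : 0 < INR m) by (unfold m; rewrite S_INR; pose proof (pos_INR (nfloor (1/delta))); lra).
  assert (him : 1 / INR m < delta).
  { apply (Rmult_lt_reg_r (INR m * / delta)). { apply Rmult_lt_0_compat; [lra| apply Rinv_0_lt_compat; lra]. }
    field_simplify; try lra. }
  set (fl := fun k : nat => nfloor (INR k * p)).
  set (fr := fun k : nat => INR k * p - INR (fl k)).
  assert (hfl : forall k, INR (fl k) <= INR k * p < INR (fl k) + 1).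
  { intro k. apply nfloor_spec. apply Rmult_le_pos; [apply pos_INR| lra]. }
  assert (hfr : forall k, 0 <= fr k < 1). { intro k. unfold fr. pose proof (hfl k). lra. }
  set (bin := fun k => nfloor (INR m * fr k)).
  assert (hbin : forall k, INR (bin k) <= INR m * fr k < INR (bin k) + 1).
  { intro k. apply nfloor_spec. pose proof (hfr k). apply Rmult_le_pos; lra. }
  destruct (php m bin) as [i [j [hij he]]].
  { intros k _. apply INR_lt'. pose proof (hbin k). pose proof (hfr k).
    assert (INR m * fr k < INR m * 1) by (apply Rmult_lt_compat_l; lra). lra. }
  assert (hclose : INR m * Rabs (fr j - fr i) < 1).
  { pose proof (hbin i); pose proof (hbin j). rewrite he in *.
    unfold Rabs; destruct (Rcase_abs (fr j - fr i)); nra. }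
  assert (hclose' : Rabs (fr j - fr i) < delta).
  { assert (Rabs (fr j - fr i) < 1 / INR m).
    { apply (Rmult_lt_reg_l (INR m)); [lra|]. field_simplify; lra. }
    lra. }
  assert (hfle : (fl i <= fl j)%nat).
  { assert (INR i * p <= INR j * p) by (apply Rmult_le_compat_r; [lra| apply le_INR; lia]).
    pose proof (hfl i); pose proof (hfl j).
    assert (INR (fl i) < INR (fl j) + 1) by lra. rewrite <- S_INR in H2. apply INR_lt' in H2. lia. }
  set (q := (j - i)%nat).
  assert (hq : INR q * p = (INR (fl j) - INR (fl i)) + (fr j - fr i)).
  { unfold q, fr. rewrite minus_INR by lia. ring. }
  destruct (Rle_or_lt (fr i) (fr j)) as [hle|hlt].
  - exists q, (fl j - fl i)%nat. split; [unfold q; lia|].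
    rewrite minus_INR by exact hfle. rewrite hq.
    rewrite Rabs_right in hclose' by lra. lra.
  - set (d := fr i - fr j).
    rewrite Rabs_left in hclose' by lra.
    set (K := (fl j - fl i)%nat).
    assert (hK : INR q * p = INR K - d) by (unfold K, d; rewrite minus_INR by exact hfle; rewrite hq; ring).
    assert (hqp : 0 < INR q * p) by (apply Rmult_lt_0_compat; [apply lt_0_INR; unfold q; lia| lra]).
    assert (hd0 : 0 < d) by (unfold d; lra).
    assert (hd1 : d < 1) by (unfold d; pose proof (hfr i); pose proof (hfr j); lra).
    assert (hK1 : (1 <= K)%nat).
    { assert (INR 0 < INR K) by (simpl; lra). apply INR_lt' in H. lia. }
    set (t := nfloor (1 / d)).
    assert (ht : INR t <= 1 / d < INR t + 1).
    { apply nfloor_spec. apply Rlt_le, Rdiv_lt_0_compat; lra. }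
    assert (htd : INR t * d <= 1 < (INR t + 1) * d).
    { destruct ht as [ht1 ht2]. split.
      - apply (Rmult_le_reg_r (/ d)); [apply Rinv_0_lt_compat; lra|]. field_simplify; try lra.
      - apply (Rmult_lt_reg_r (/ d)); [apply Rinv_0_lt_compat; lra|]. field_simplify; try lra. }
    assert (ht1 : (1 <= t)%nat).
    { assert (1 < 1 / d). { apply (Rmult_lt_reg_r d); [lra|]. field_simplify; lra. }
      assert (INR 0 < INR t) by (simpl; lra). apply INR_lt' in H0. lia. }
    exists (t * q)%nat, (t * K - 1)%nat. split.
    + assert (1 <= q)%nat by (unfold q; lia). nia.
    + rewrite minus_INR by nia. rewrite !mult_INR. simpl INR.
      replace (INR t * INR q * p) with (INR t * (INR q * p)) by ring. rewrite hK.
      assert (d < delta) by (unfold d; lra). replace (INR t * (INR K - d)) with (INR t * INR K - INR t * d) by ring. lra.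
Qed.

Definition same_lab {W : Type} (A B : set W) (x y : W) : Prop :=
  (B x <-> B y) /\ (B x -> (A x <-> A y)).
Definition evM' {W : Type} (A B : set W) (E : set W) : Prop :=
  forall x y, same_lab A B x y -> (E x <-> E y).

Lemma evM'_alg {W : Type} (A B : set W) : is_algebra (evM' A B).
Proof.
  split.
  - intros x y _. unfold setT; tauto.
  - intros E hE x y h. unfold setC. specialize (hE x y h). tauto.
  - intros E F hE hF x y h. unfold setU. specialize (hE x y h). specialize (hF x y h). tauto.
Qed.

Definition Mp (M : mspace) (A B : set (carrier M)) : mspace :=
  MSpace (carrier M) (evM' A B) (evM'_alg A B).

Lemma evM'_to_M (M : mspace) (A B : set (carrier M)) (hA : events M A) (hB : events M B) E :
  evM' A B E -> events M E.
Proof.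
  intro hE.
  set (c1 := exists x, E x /\ A x /\ B x).
  set (c2 := exists x, E x /\ ~ A x /\ B x).
  set (c3 := exists x, E x /\ ~ B x).
  set (pc := fun (c : Prop) (S : set (carrier M)) => if excluded_middle_informative c then S else set0).
  assert (hpc : forall c S, events M S -> events M (pc c S)).
  { intros c S hS. unfold pc. destruct (excluded_middle_informative c); auto. apply ev0. }
  assert (hpc' : forall c S w, pc c S w <-> c /\ S w).
  { intros c S w. unfold pc. destruct (excluded_middle_informative c); unfold set0; tauto. }
  assert (Eeq : E = setU (setU (pc c1 (setI A B)) (pc c2 (setI (setC A) B))) (pc c3 (setC B))).
  { apply set_ext; intro w. unfold setU. rewrite !hpc'. unfold setI, setC. split.
    - intro hw. destruct (classic (B w)) as [hb|hb]; [destruct (classic (A w)) as [ha|ha]|].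
      + left; left. split; [exists w; auto| auto].
      + left; right. split; [exists w; auto| auto].
      + right. split; [exists w; auto| auto].
    - intros [[[[x [hx [hax hbx]]] [ha hb]]|[[x [hx [hax hbx]]] [ha hb]]]|[[x [hx hbx]] hb]];
        apply (hE x w); auto; unfold same_lab; tauto. }
  rewrite Eeq. apply evU; [apply evU|]; apply hpc.
  - apply alg_I; auto.
  - apply alg_I; [apply evC|]; auto.
  - apply evC; auto.
Qed.

Definition idshift (M : mspace) (A B : set (carrier M)) (hA : events M A) (hB : events M B)
  : rep_shift M (Mp M A B) :=
  RepShift M (Mp M A B) (fun w => w) (fun w' => ex_intro _ w' eq_refl)
    (fun E h => evM'_to_M M A B hA hB E h).

Definition evN {W : Type} (B : set W) (E : set (W * (nat * bool))) : Prop :=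
  forall w w' jb, (B w <-> B w') -> (E (w, jb) <-> E (w', jb)).

Lemma evN_alg {W : Type} (B : set W) : is_algebra (evN B).
Proof.
  split.
  - intros w w' jb _. unfold setT; tauto.
  - intros E hE w w' jb h. unfold setC. specialize (hE w w' jb h). tauto.
  - intros E F hE hF w w' jb h. unfold setU. specialize (hE w w' jb h). specialize (hF w w' jb h). tauto.
Qed.

Definition Nsp (M : mspace) (B : set (carrier M)) : mspace :=
  MSpace (carrier M * (nat * bool)) (evN B) (evN_alg B).

Lemma evNB {W : Type} (B : set W) (Phi : nat * bool -> Prop) :
  evN B (fun x => B (fst x) /\ Phi (snd x)).
Proof. intros w w' jb h. simpl. tauto. Qed.

Definition dd (n k j : nat) : nat := ((j mod n + n - k) mod n)%nat.
Definition inS (n L k : nat) (jb : nat * bool) : Prop :=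
  (dd n k (fst jb) < L)%nat \/ (dd n k (fst jb) = L /\ snd jb = true).

Definition dec := excluded_middle_informative.

Definition gk {W : Type} (A B : set W) (n L k : nat) (wa wb : W) (x : W * (nat * bool)) : W :=
  let (w, jb) := x in
  if dec (B w) then
    (if dec (inS n L k jb) then (if dec (A w) then w else wa) else (if dec (A w) then wb else w))
  else w.

Lemma gk_lab {W : Type} (A B : set W) n L k wa wb w jb :
  A wa -> B wa -> ~ A wb -> B wb ->
  (B w -> B (gk A B n L k wa wb (w, jb)) /\ (A (gk A B n L k wa wb (w, jb)) <-> inS n L k jb)) /\
  (~ B w -> gk A B n L k wa wb (w, jb) = w).
Proof.
  intros ha hb hna hnb. unfold gk.
  destruct (dec (B w)) as [hw|hw]; [|split; [tauto| auto]].
  split; [|tauto]. intros _.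
  destruct (dec (inS n L k jb)) as [hi|hi]; destruct (dec (A w)) as [haw|haw]; tauto.
Qed.

Lemma dd_self n k : (k < n)%nat -> dd n k k = O.
Proof.
  intro hk. unfold dd. pose proof (mod_lemma1 n k 0 hk ltac:(lia)) as H.
  rewrite Nat.add_0_r in H. exact H.
Qed.

Lemma dd_kL n k L : (k < n)%nat -> (L < n)%nat -> dd n k ((k + L) mod n) = L.
Proof.
  intros hk hL. unfold dd. rewrite Nat.Div0.mod_mod. apply mod_lemma1; auto.
Qed.

Definition gshift (M : mspace) (A B : set (carrier M)) (n L k : nat) (wa wb : carrier M)
  (ha : A wa) (hb : B wa) (hna : ~ A wb) (hnb : B wb) (hk : (k < n)%nat) (hL : (L < n)%nat)
  : rep_shift (Nsp M B) (Mp M A B).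
Proof.
  refine (RepShift (Nsp M B) (Mp M A B) (gk A B n L k wa wb) _ _).
  - intro w'. destruct (classic (B w')) as [hw|hw].
    + destruct (classic (A w')) as [haw|haw].
      * exists (w', (k, true)). unfold gk. destruct (dec (B w')); [|tauto].
        destruct (dec (inS n L k (k, true))) as [hi|hi].
        -- destruct (dec (A w')); tauto.
        -- exfalso; apply hi. unfold inS. simpl. rewrite dd_self by auto. destruct L; [right; auto| left; lia].
      * exists (w', ((k + L) mod n, false)%nat). unfold gk. destruct (dec (B w')); [|tauto].
        destruct (dec (inS n L k ((k + L) mod n, false)%nat)) as [hi|hi].
        -- exfalso. unfold inS in hi. simpl in hi. rewrite dd_kL in hi by auto. destruct hi as [h|[_ h]]; [lia| discriminate].
        -- destruct (dec (A w')); tauto.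
    + exists (w', (O, false)). unfold gk. destruct (dec (B w')); tauto.
  - intros E hE w w' jb hbb. unfold preimage. apply hE.
    destruct (gk_lab A B n L k wa wb w jb ha hb hna hnb) as [h1 h2].
    destruct (gk_lab A B n L k wa wb w' jb ha hb hna hnb) as [h1' h2'].
    destruct (classic (B w)) as [hw|hw].
    + assert (hw' : B w') by tauto. destruct (h1 hw), (h1' hw'). unfold same_lab. tauto.
    + assert (hw' : ~ B w') by tauto. rewrite (h2 hw), (h2' hw'). unfold same_lab. tauto.
Defined.

Definition mu_pr {W : Type} (n : nat) (wT wF gam : R) (wa wc : W) (E : set (W * (nat * bool))) : R :=
  sumR n (fun j => wT * I (E (wa, (j, true))) + wF * I (E (wa, (j, false)))) + gam * I (E (wc, (O, false))).

Lemma I_ge0 P : 0 <= I P.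
Proof. unfold I; destruct (excluded_middle_informative P); lra. Qed.

Lemma I_union (P Q : Prop) : (P -> Q -> False) -> I (P \/ Q) = I P + I Q.
Proof.
  intro h. unfold I.
  destruct (excluded_middle_informative (P \/ Q)), (excluded_middle_informative P),
    (excluded_middle_informative Q); tauto || lra.
Qed.

Lemma I_true (P : Prop) : P -> I P = 1.
Proof. intro h; unfold I; destruct (excluded_middle_informative P); tauto. Qed.
Lemma I_false (P : Prop) : ~ P -> I P = 0.
Proof. intro h; unfold I; destruct (excluded_middle_informative P); tauto. Qed.
Lemma I_iff (P Q : Prop) : (P <-> Q) -> I P = I Q.
Proof. intro h. assert (P = Q) by (apply propositional_extensionality; auto). subst; auto. Qed.

Definition mu (M : mspace) (B : set (carrier M)) (n : nat) (wT wF gam : R) (wa wc : carrier M)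
  (h1 : 0 <= wT) (h2 : 0 <= wF) (h3 : 0 <= gam) (h4 : INR n * (wT + wF) + gam = 1) : prob (Nsp M B).
Proof.
  refine (Prob (Nsp M B) (fun E _ => mu_pr n wT wF gam wa wc E) _ _ _).
  - intros E _. unfold mu_pr.
    assert (0 <= sumR n (fun j => wT * I (E (wa, (j, true))) + wF * I (E (wa, (j, false))))).
    { rewrite <- (Rmult_0_r (INR n)), <- sumR_const. apply sumR_le. intros.
      pose proof (I_ge0 (E (wa, (j, true)))); pose proof (I_ge0 (E (wa, (j, false)))). nra. }
    pose proof (I_ge0 (E (wc, (O, false)))). nra.
  - intros _. unfold mu_pr, setT. rewrite (I_true True Logic.I).
    rewrite (sumR_ext n _ (fun _ => wT + wF)) by (intros; lra).
    rewrite sumR_const. lra.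
  - intros E F _ _ _ hd. unfold mu_pr, setU.
    rewrite (I_union _ _ (hd _)).
    rewrite (sumR_ext n _ (fun j => (wT * I (E (wa, (j, true))) + wF * I (E (wa, (j, false)))) +
                                  (wT * I (F (wa, (j, true))) + wF * I (F (wa, (j, false))))))
      by (intros; rewrite !I_union by (apply hd); lra).
    rewrite sumR_plus. lra.
Defined.

Definition push {M M' : mspace} (f : rep_shift M M') (Q : prob M) : prob M'.
Proof.
  refine (Prob M' (fun E hE => pr Q (preimage (rs_fun f) E) (rs_meas f E hE)) _ _ _).
  - intros E hE. apply pr_ge0.
  - intros hT. exact (pr_T _ Q _).
  - intros E F hE hF hEF hd. exact (pr_add _ Q _ _ _ _ _ (fun w => hd (rs_fun f w))).
Defined.

Lemma piece (M : mspace) (A B : set (carrier M)) (Q : prob (Mp M A B)) E S hES hS :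
  evM' A B E -> (forall x y, S x -> S y -> same_lab A B x y) ->
  pr Q (setI E S) hES = I (exists x, E x /\ S x) * pr Q S hS.
Proof.
  intros hE hS'. destruct (classic (exists x, E x /\ S x)) as [[x [hx hsx]]|hn].
  - rewrite I_true by eauto. rewrite Rmult_1_l. apply pr_ext. apply set_ext; intro w; unfold setI; split; [tauto|].
    intro hw; split; auto. apply (hE x w); auto.
  - rewrite I_false by auto. rewrite Rmult_0_l. apply pr_empty. intros w [h1 h2]; apply hn; eauto.
Qed.

Lemma evS1 {W : Type} (A B : set W) : evM' A B (setI A B).
Proof. intros x y h. unfold same_lab, setI in *. tauto. Qed.
Lemma evS2 {W : Type} (A B : set W) : evM' A B (setI (setC A) B).
Proof. intros x y h. unfold same_lab, setI, setC in *. tauto. Qed.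
Lemma evS3 {W : Type} (A B : set W) : evM' A B (setC B).
Proof. intros x y h. unfold same_lab, setC in *. tauto. Qed.
Lemma evSB {W : Type} (A B : set W) : evM' A B B.
Proof. intros x y h. unfold same_lab in *. tauto. Qed.

Lemma decomp (M : mspace) (A B : set (carrier M)) (Q : prob (Mp M A B)) E hE :
  pr Q E hE = I (exists x, E x /\ setI A B x) * pr Q (setI A B) (evS1 A B)
            + I (exists x, E x /\ setI (setC A) B x) * (pr Q B (evSB A B) - pr Q (setI A B) (evS1 A B))
            + I (exists x, E x /\ setC B x) * (1 - pr Q B (evSB A B)).
Proof.
  pose (M' := Mp M A B).
  assert (h1 : events M' (setI E (setI A B))) by (apply (alg_I M'); [exact hE| apply evS1]).
  assert (h2 : events M' (setI E (setI (setC A) B))) by (apply (alg_I M'); [exact hE| apply evS2]).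
  assert (h3 : events M' (setI E (setC B))) by (apply (alg_I M'); [exact hE| apply evS3]).
  assert (hEB : events M' (setI E B)) by (apply (alg_I M'); [exact hE| apply evSB]).
  rewrite (pr_split Q E B hE (evSB A B) hEB h3).
  change (carrier (Mp M A B)) with (carrier M) in *.
  rewrite (pr_add' Q _ _ (setI E B) h1 h2 hEB).
  2:{ intro w. unfold setI, setC. split; [intros [he hb]; destruct (classic (A w)); tauto| tauto]. }
  2:{ unfold setI, setC; tauto. }
  erewrite (piece M A B Q E _ h1 (evS1 A B) hE) by (unfold same_lab, setI; tauto).
  erewrite (piece M A B Q E _ h2 (evS2 A B) hE) by (unfold same_lab, setI, setC; tauto).
  erewrite (piece M A B Q E _ h3 (evS3 A B) hE) by (unfold same_lab, setC; tauto).
  assert (hc : pr Q (setC B) (evS3 A B) = 1 - pr Q B (evSB A B)) by exact (pr_compl Q B _ _).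
  rewrite hc.
  rewrite (pr_add' Q (setI A B) (setI (setC A) B) B (evS1 A B) (evS2 A B) (evSB A B)).
  2:{ intro w. unfold setI, setC. split; [intros hb; destruct (classic (A w)); tauto| tauto]. }
  2:{ unfold setI, setC; tauto. }
  ring.
Qed.

Lemma atoms (M : mspace) (A B : set (carrier M)) (Q1 Q2 : prob (Mp M A B)) :
  pr Q1 (setI A B) (evS1 A B) = pr Q2 (setI A B) (evS1 A B) ->
  pr Q1 B (evSB A B) = pr Q2 B (evSB A B) ->
  forall E hE, pr Q1 E hE = pr Q2 E hE.
Proof.
  intros e1 e2 E hE. rewrite (decomp M A B Q1 E hE), (decomp M A B Q2 E hE), e1, e2. reflexivity.
Qed.

Lemma coverage (M : mspace) (B : set (carrier M)) (rho : prob (Nsp M B)) n L :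
  (0 < n)%nat -> (L <= n)%nat ->
  pr rho _ (evNB B (fun _ => True)) = 1 ->
  INR L <= sumR n (fun k => pr rho _ (evNB B (inS n L k))).
Proof.
  intros hn hLn h1.
  set (xc := fun c => pr rho _ (evNB B (fun jb => (fst jb mod n = c)%nat))).
  assert (hU : forall m, pr rho _ (evNB B (fun jb => (fst jb mod n < m)%nat)) = sumR m xc).
  { induction m.
    - simpl. apply pr_empty. intros w [_ h]. lia.
    - simpl sumR. rewrite <- IHm. unfold xc.
      apply pr_add'.
      + intros x. simpl. split; [intros [hb hm]; destruct (Nat.eq_dec (fst (snd x) mod n) m); [right|left]; split; auto; lia|].
        intros [[hb hm]|[hb hm]]; split; auto; lia.
      + intros x [_ h1'] [_ h2']. lia. }
  assert (hsum1 : sumR n xc = 1).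
  { rewrite <- hU, <- h1. apply pr_ext. apply set_ext. intros x; simpl. split; [tauto|].
    intros [hb _]; split; auto. apply Nat.mod_upper_bound. lia. }
  assert (hV : forall k, (k < n)%nat -> forall m, (m <= n)%nat ->
     pr rho _ (evNB B (fun jb => (dd n k (fst jb) < m)%nat)) = sumR m (fun i => xc ((k + i) mod n)%nat)).
  { intros k hk. induction m; intros hm.
    - simpl. apply pr_empty. intros w [_ h]. lia.
    - simpl sumR. rewrite <- IHm by lia. unfold xc.
      rewrite (pr_add' rho _ _ _ (evNB B (fun jb => (dd n k (fst jb) < m)%nat))
                  (evNB B (fun jb => (dd n k (fst jb) = m)%nat))).
      + f_equal. apply pr_ext. apply set_ext. intros x; simpl. unfold dd.
        rewrite mod_equiv; try lia. tauto. apply Nat.mod_upper_bound; lia.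
      + intros x; simpl. split; [intros [hb hm']; destruct (Nat.eq_dec (dd n k (fst (snd x))) m); [right|left]; split; auto; lia|].
        intros [[hb hm']|[hb hm']]; split; auto; lia.
      + intros x [_ h1'] [_ h2']. lia. }
  assert (hle : forall k, (k < n)%nat ->
     sumR L (fun i => xc ((k + i) mod n)%nat) <= pr rho _ (evNB B (inS n L k))).
  { intros k hk. rewrite <- hV by lia. apply pr_mono. intros x [hb hd]. split; auto. left; auto. }
  apply Rle_trans with (sumR n (fun k => sumR L (fun i => xc ((k + i) mod n)%nat))).
  2:{ apply sumR_le. auto. }
  rewrite sumR_swap.
  rewrite (sumR_ext L _ (fun _ => 1)).
  2:{ intros i hi. rewrite (sumR_rot n i xc hn). exact hsum1. }
  rewrite sumR_const. lra.
Qed.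

Lemma inS_true n L k j : inS n L k (j, true) <-> (dd n k j < S L)%nat.
Proof. unfold inS; simpl. split; [intros [h|[h _]]; lia| intro h; destruct (Nat.eq_dec (dd n k j) L); [right; auto| left; lia]]. Qed.
Lemma inS_false n L k j : inS n L k (j, false) <-> (dd n k j < L)%nat.
Proof. unfold inS; simpl. split; [intros [h|[_ h]]; [lia| discriminate]| intro h; left; auto]. Qed.

Lemma sum_dd n k m : (k < n)%nat -> (m <= n)%nat ->
  sumR n (fun j => I (dd n k j < m)%nat) = INR m.
Proof.
  intros hk hm.
  rewrite (sumR_ext n _ (fun j => (fun c => I (c < m)%nat) ((j + (n - k)) mod n)%nat)).
  - pose proof (sumR_rot n (n - k) (fun c => I (c < m)%nat) ltac:(lia)) as HR. cbv beta in HR. rewrite HR.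
    rewrite sumR_ind_lt. f_equal. lia.
  - intros j hj. unfold dd. rewrite (Nat.mod_small j) by lia. f_equal. f_equal. f_equal. lia.
Qed.

Lemma pre_SAB {W : Type} (A B : set W) n L k wa wb :
  A wa -> B wa -> ~ A wb -> B wb ->
  preimage (gk A B n L k wa wb) (setI A B) = (fun x => B (fst x) /\ inS n L k (snd x)).
Proof.
  intros ha hb hna hnb. apply set_ext. intros [w jb]. unfold preimage, setI; cbn [fst snd].
  destruct (gk_lab A B n L k wa wb w jb ha hb hna hnb) as [h1 h2].
  destruct (classic (B w)) as [hw|hw].
  - destruct (h1 hw). tauto.
  - rewrite (h2 hw). tauto.
Qed.

Lemma pre_B {W : Type} (A B : set W) n L k wa wb :
  A wa -> B wa -> ~ A wb -> B wb ->
  preimage (gk A B n L k wa wb) B = (fun x => B (fst x) /\ True).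
Proof.
  intros ha hb hna hnb. apply set_ext. intros [w jb]. unfold preimage; cbn [fst snd].
  destruct (gk_lab A B n L k wa wb w jb ha hb hna hnb) as [h1 h2].
  destruct (classic (B w)) as [hw|hw].
  - destruct (h1 hw). tauto.
  - rewrite (h2 hw). tauto.
Qed.

Theorem proposition4p3 (Upd : UpdFamily) (hUpd : is_update_family Upd)
  (hP1 : P1 Upd) (hP2 : P2 Upd)
  (M : mspace) (P : prob M) (A B : set (carrier M))
  (hA : events M A) (hB : events M B)
  (P' : prob M) (hP' : Upd M (single P) B P')
  (hpos : 0 < cond_pr P A B hA hB) (hlt1 : cond_pr P A B hA hB < 1)
  (hless : pr P' A hA < cond_pr P A B hA hB) :
  exists P'' : prob M, Upd M (single P) B P'' /\ pr P'' A hA > cond_pr P A B hA hB.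
Proof.
  set (hAB := alg_I M A B hA hB).
  set (al := pr P (setI A B) hAB). set (be := pr P B hB).
  assert (hp : cond_pr P A B hA hB = al / be) by reflexivity.
  set (p := cond_pr P A B hA hB) in *.
  assert (hal_be : al <= be) by (apply pr_mono; unfold setI; tauto).
  assert (hal0 : 0 <= al) by apply pr_ge0.
  assert (hbe1 : be <= 1) by apply pr_le1.
  assert (hbe0 : 0 < be).
  { destruct (Rle_lt_dec be 0) as [h|h]; auto. exfalso. assert (al = 0) as H by lra.
    rewrite hp, H in hpos. unfold Rdiv in hpos; lra. }
  assert (hal : al = p * be) by (rewrite hp; field; lra).
  assert (exa : exists wa, A wa /\ B wa).
  { apply NNPP; intro hn. assert (al = 0) as H.
    { apply pr_empty. intros w [h1 h2]; apply hn; eauto. }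
    rewrite hal in H. nra. }
  assert (exb : exists wb, ~ A wb /\ B wb).
  { apply NNPP; intro hn. assert (al = be) as H.
    { apply pr_ext. apply set_ext. intro w; unfold setI. split; [tauto|]. intro hw; split; auto.
      apply NNPP; intro hnw; apply hn; eauto. }
    rewrite hal in H. assert (p = 1) by (apply (Rmult_eq_reg_r be); lra). lra. }
  destruct exa as [wa [ha hb]]. destruct exb as [wb [hna hnb]].
  set (delta := p - pr P' A hA).
  assert (hdelta : 0 < delta) by (unfold delta; lra).
  destruct (dirichlet p (Rmin delta 1) hpos) as [n [L [hn1 [hL1 hL2]]]].
  { apply Rmin_glb_lt; lra. }
  assert (hnpos : 0 < INR n) by (apply lt_0_INR; lia).
  assert (hLn : (L < n)%nat).
  { apply INR_lt'. assert (INR n * p < INR n * 1) by (apply Rmult_lt_compat_l; lra). lra. }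
  assert (hmin1 : Rmin delta 1 <= 1) by apply Rmin_r.
  assert (hmin2 : Rmin delta 1 <= delta) by apply Rmin_l.
  set (theta := INR n * p - INR L).
  set (wT := be * theta / INR n). set (wF := be * (1 - theta) / INR n). set (gam := 1 - be).
  assert (hwT : 0 <= wT).
  { unfold wT. apply Rmult_le_pos; [apply Rmult_le_pos; unfold theta; lra| apply Rlt_le, Rinv_0_lt_compat; lra]. }
  assert (hwF : 0 <= wF).
  { unfold wF. apply Rmult_le_pos; [apply Rmult_le_pos; unfold theta; lra| apply Rlt_le, Rinv_0_lt_compat; lra]. }
  assert (hgam : 0 <= gam) by (unfold gam; lra).
  assert (htot : INR n * (wT + wF) + gam = 1) by (unfold wT, wF, gam; field; lra).
  set (wc := epsilon (inhabits wa) (fun w => ~ B w)).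
  assert (hc : ~ B wc \/ gam = 0).
  { destruct (classic (exists w, ~ B w)) as [h|h].
    - left. unfold wc. apply epsilon_spec. exact h.
    - right. unfold gam. assert (pr P (setC B) (evC M B hB) = 0).
      { apply pr_empty. intros w hw; apply h; eauto. }
      rewrite (pr_compl P B hB) in H. unfold be. lra. }
  set (mu0 := mu M B n wT wF gam wa wc hwT hwF hgam htot).
  set (M' := Mp M A B).
  set (idsh := idshift M A B hA hB).
  set (gsh := fun k (hk : (k < n)%nat) => gshift M A B n L k wa wb ha hb hna hnb hk hLn).
  assert (hmuS : forall k, (k < n)%nat -> mu_pr n wT wF gam wa wc (fun x => B (fst x) /\ inS n L k (snd x)) = al).
  { intros k hk. unfold mu_pr. cbn [fst snd].
    rewrite (sumR_ext n _ (fun j => wT * I (dd n k j < S L)%nat + wF * I (dd n k j < L)%nat)).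
    2:{ intros j hj. f_equal; f_equal; [apply I_iff; rewrite <- inS_true| apply I_iff; rewrite <- inS_false]; tauto. }
    rewrite sumR_plus, !sumR_scal, !sum_dd by lia.
    assert (gam * I (B wc /\ inS n L k (O, false)) = 0) as H0.
    { destruct hc as [h|h]; [rewrite I_false by tauto; ring| rewrite h; ring]. }
    rewrite H0. rewrite hal. rewrite S_INR. unfold wT, wF, theta. field. lra. }
  assert (hmuB : mu_pr n wT wF gam wa wc (fun x => B (fst x) /\ True) = be).
  { unfold mu_pr. cbn [fst snd].
    rewrite (sumR_ext n _ (fun j => wT + wF)).
    2:{ intros j hj. rewrite I_true by tauto. ring. }
    rewrite sumR_const.
    assert (gam * I (B wc /\ True) = 0) as H0.
    { destruct hc as [h|h]; [rewrite I_false by tauto; ring| rewrite h; ring]. }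
    rewrite H0. unfold wT, wF. field. lra. }
  assert (agree : forall k (hk : (k < n)%nat) E hE, pr (push (gsh k hk) mu0) E hE = pr (push idsh P) E hE).
  { intros k hk. apply atoms.
    - change (mu_pr n wT wF gam wa wc (preimage (gk A B n L k wa wb) (setI A B)) = pr P (preimage (fun w => w) (setI A B)) (rs_meas idsh _ (evS1 A B))).
      rewrite pre_SAB by auto. rewrite hmuS by auto. apply pr_ext. reflexivity.
    - change (mu_pr n wT wF gam wa wc (preimage (gk A B n L k wa wb) B) = pr P (preimage (fun w => w) B) (rs_meas idsh _ (evSB A B))).
      rewrite pre_B by auto. rewrite hmuB. apply pr_ext. reflexivity. }
  assert (Xeq : forall k (hk : (k < n)%nat), push_set (gsh k hk) (single mu0) = push_set idsh (single P)).
  { intros k hk. apply set_ext. intro Q. unfold push_set, single, is_pushforward. split.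
    - intros [P0 [e h]]. subst P0. exists P. split; [reflexivity|]. intros E hE. rewrite h. exact (agree k hk E hE).
    - intros [P0 [e h]]. subst P0. exists mu0. split; [reflexivity|]. intros E hE. rewrite h. symmetry. exact (agree k hk E hE). }
  set (Q1 := push idsh P').
  assert (hQ1 : Upd M' (push_set idsh (single P)) B Q1).
  { apply (proj2 (hP2 M M' idsh (single P) B (evSB A B) Q1)). exists P'. split; [exact hP'|]. intros E hE. reflexivity. }
  assert (hn0 : (0 < n)%nat) by lia.
  rewrite <- (Xeq O hn0) in hQ1.
  destruct (proj1 (hP2 _ M' (gsh O hn0) (single mu0) B (evSB A B) Q1) hQ1) as [rho [hrho hpush]].
  assert (hpreB : forall k (hk : (k < n)%nat), preimage (rs_fun (gsh k hk)) B = (fun x => B (fst x) /\ True)).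
  { intros k hk. apply pre_B; auto. }
  assert (hrho1 : pr rho _ (evNB B (fun _ => True)) = 1).
  { pose proof (hP1 _ _ _ (rs_meas (gsh O hn0) B (evSB A B)) _ hrho) as H.
    rewrite <- H. apply pr_ext. symmetry. apply hpreB. }
  pose proof (coverage M B rho n L hn0 ltac:(lia) hrho1) as Hcov.
  assert (hQk : forall k (hk : (k < n)%nat), exists Qk, Upd M (single P) B Qk /\
             pr Qk A hA = pr rho _ (evNB B (inS n L k))).
  { intros k hk.
    assert (h1 : Upd M' (push_set (gsh k hk) (single mu0)) B (push (gsh k hk) rho)).
    { apply (proj2 (hP2 _ M' (gsh k hk) (single mu0) B (evSB A B) _)). exists rho. split; [|intros E hE; reflexivity].
      assert (E : preimage (rs_fun (gsh O hn0)) B = preimage (rs_fun (gsh k hk)) B) by (rewrite !hpreB; reflexivity).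
      exact (eq_rect _ (fun S => Upd _ (single mu0) S rho) hrho _ E). }
    rewrite (Xeq k hk) in h1.
    destruct (proj1 (hP2 M M' idsh (single P) B (evSB A B) _) h1) as [Qk [hQk hpk]].
    exists Qk. split; [exact hQk|].
    rewrite (pr_on_full Qk A B hA hB hAB (hP1 _ _ _ hB _ hQk)).
    pose proof (hpk (setI A B) (evS1 A B)) as H. 
    change (pr rho (preimage (gk A B n L k wa wb) (setI A B)) (rs_meas (gsh k hk) _ (evS1 A B)) = pr Qk (preimage (fun w => w) (setI A B)) (rs_meas idsh _ (evS1 A B))) in H.
    transitivity (pr Qk (preimage (fun w => w) (setI A B)) (rs_meas idsh _ (evS1 A B))).
    - apply pr_ext; reflexivity.
    - rewrite <- H. apply pr_ext. apply pre_SAB; auto. }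
  assert (h0 : pr rho _ (evNB B (inS n L O)) = pr P' A hA).
  { pose proof (hpush (setI A B) (evS1 A B)) as H.
    change (pr Q1 (setI A B) (evS1 A B)) with (pr P' (preimage (fun w => w) (setI A B)) (rs_meas idsh _ (evS1 A B))) in H.
    rewrite (pr_on_full P' A B hA hB hAB (hP1 _ _ _ hB _ hP')).
    transitivity (pr P' (preimage (fun w => w) (setI A B)) (rs_meas idsh _ (evS1 A B))); [|apply pr_ext; reflexivity].
    rewrite H. apply pr_ext. symmetry. apply pre_SAB; auto. }
  destruct (classic (exists P'' : prob M, Upd M (single P) B P'' /\ pr P'' A hA > p)) as [h|hno]; [exact h| exfalso].
  assert (hle : forall k, (k < n)%nat -> pr rho _ (evNB B (inS n L k)) <= p).
  { intros k hk. destruct (hQk k hk) as [Qk [hu he]]. rewrite <- he.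
    apply Rnot_gt_le. intro hg. apply hno. exists Qk. auto. }
  destruct n as [|n']; [lia|].
  rewrite sumR_shift in Hcov. cbv beta in Hcov. rewrite h0 in Hcov.
  assert (Hc2 : INR L <= pr P' A hA + sumR n' (fun _ => p)).
  { eapply Rle_trans; [exact Hcov|]. apply Rplus_le_compat_l. apply sumR_le. intros j hj. apply hle. lia. }
  rewrite sumR_const in Hc2. rewrite S_INR, Rmult_plus_distr_r, Rmult_1_l in hL2. assert (hdl : delta = p - pr P' A hA) by reflexivity. set (q := INR n' * p) in *. lra.
Qed.
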